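(* Working in the internal logic of an arbitrary topos, let $L$ be a Boolean algebra and $\mu$ a probability valuation on $L$. Then $\mu(x)$ is a Dedekind real for every $x\in L$.
   Context: Lower reals are (rounded, inhabited, downward closed) sets of rationals, equivalently reals approximated from below; $[0,1]_l$ denotes lower reals between $0$ and $1$. A probability valuation on a Boolean algebra $L$ is a function $\mu:L\to[0,1]_l$ with $\mu(0)=0$, $\mu(1)=1$, $x\le y\Rightarrow\mu(x)\le\mu(y)$, and $\mu(x)+\mu(y)=\mu(x\wedge y)+\mu(x\vee y)$. ''Dedekind real'' means the lower real is located, i.e. determines a Dedekind cut (for rationals $s<t$, $s<\mu(x)$ or $\mu(x)\le t$). No excluded middle or choice is assumed. *)

(* Defs.v *)
From Stdlib Require Import QArith.
Open Scope Q_scope.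

Record BooleanAlgebra := {
  ba_car :> Type;
  ba_bot : ba_car;
  ba_top : ba_car;
  ba_meet : ba_car -> ba_car -> ba_car;
  ba_join : ba_car -> ba_car -> ba_car;
  ba_compl : ba_car -> ba_car;
  ba_meetA : forall x y z, ba_meet x (ba_meet y z) = ba_meet (ba_meet x y) z;
  ba_joinA : forall x y z, ba_join x (ba_join y z) = ba_join (ba_join x y) z;
  ba_meetC : forall x y, ba_meet x y = ba_meet y x;
  ba_joinC : forall x y, ba_join x y = ba_join y x;
  ba_meetK : forall x y, ba_meet x (ba_join x y) = x;
  ba_joinK : forall x y, ba_join x (ba_meet x y) = x;
  ba_meetDr : forall x y z,
      ba_meet x (ba_join y z) = ba_join (ba_meet x y) (ba_meet x z);
  ba_meet1 : forall x, ba_meet x ba_top = x;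
  ba_join0 : forall x, ba_join x ba_bot = x;
  ba_meetCr : forall x, ba_meet x (ba_compl x) = ba_bot;
  ba_joinCr : forall x, ba_join x (ba_compl x) = ba_top
}.

Definition ba_le (L : BooleanAlgebra) (x y : L) : Prop := ba_meet L x y = x.

Record lreal := {
  lr_pred :> Q -> Prop;
  lr_inhabited : exists q, lr_pred q;
  lr_down : forall q r, q <= r -> lr_pred r -> lr_pred q;
  lr_rounded : forall q, lr_pred q -> exists r, q < r /\ lr_pred r
}.

Definition lr_le (x y : Q -> Prop) : Prop := forall q, x q -> y q.
Definition lr_eq (x y : Q -> Prop) : Prop := forall q, x q <-> y q.

Definition lr_const (c : Q) : Q -> Prop := fun q => q < c.

Definition lr_add (x y : Q -> Prop) : Q -> Prop :=
  fun q => exists a b, x a /\ y b /\ q < a + b.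

Definition lr_in01 (x : lreal) : Prop :=
  lr_le (lr_const 0) x /\ lr_le x (lr_const 1).

Definition prob_valuation (L : BooleanAlgebra) (mu : L -> lreal) : Prop :=
  (forall x, lr_in01 (mu x)) /\
  lr_eq (mu (ba_bot L)) (lr_const 0) /\
  lr_eq (mu (ba_top L)) (lr_const 1) /\
  (forall x y, ba_le L x y -> lr_le (mu x) (mu y)) /\
  (forall x y, lr_eq (lr_add (mu x) (mu y))
                     (lr_add (mu (ba_meet L x y)) (mu (ba_join L x y)))).

(** A lower real is a Dedekind real when it is located:
    for rationals s < t, s < x or x <= t. *)
Definition located (x : lreal) : Prop :=
  forall s t : Q, s < t -> x s \/ lr_le x (lr_const t).

(* Main.v *)
Require Import Defs.
From Stdlib Require Import QArith Lqa.

Theorem lemma24 (L : BooleanAlgebra) (mu : L -> lreal) :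
  prob_valuation L mu -> forall x : L, located (mu x).
Proof.
  intros [H01 [Hbot [Htop [Hmon Hmod]]]] x s t Hst.
  pose proof (Hmod x (ba_compl L x)) as Hm.
  rewrite ba_meetCr, ba_joinCr in Hm.
  set (e := t - s).
  assert (He : 0 < e) by (unfold e; lra).
  assert (Hedef : e == t - s) by (unfold e; apply Qeq_refl). clearbody e.
  assert (Hin : lr_add (mu x) (mu (ba_compl L x)) (1 - e)).
  { apply Hm. exists (- (e*(1#2))), (1 - e*(1#4)). split; [|split].
    - apply Hbot. unfold lr_const. lra.
    - apply Htop. unfold lr_const. lra.
    - lra. }
  destruct Hin as [a [b [Ha [Hb Hab]]]].
  destruct (Qlt_le_dec a s) as [Has|Hsa].
  - right. intros q Hq. unfold lr_const.
    destruct (Qlt_le_dec q t) as [Hqt|Htq]; [exact Hqt|].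
    exfalso.
    assert (Hr : lr_add (mu x) (mu (ba_compl L x)) 1).
    { exists q, b. split; [exact Hq|split; [exact Hb|]].
      assert (q + b > 1) by lra. lra. }
    apply Hm in Hr. destruct Hr as [a' [b' [Ha' [Hb' Hr]]]].
    apply Hbot in Ha'. apply Htop in Hb'. unfold lr_const in *. lra.
  - left. exact (lr_down _ s a Hsa Ha).
Qed.
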